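(* Let $w\in\mathbb{C}^L$ be real and nonnegative, $a$ a positive integer dividing $L$, $N=L/a$, $M$ a positive integer, and let $w_r$, $M_L$, $b_L$, $\phi_{m,n,r}$ be as in the context. For $s,t\in\mathbb{Z}_L$ and $n,r\in\mathbb{Z}_N$ define $\beta_{nr}(s,t)=w_r[t-na]\,w_r[t-na-s]$. Let $I$ be any admissible selection function for which $M[n,r]=M_{\mathrm{g}}$ for all $n,r$, for some $M_{\mathrm{g}}\in\{1,2,\dots,L\}$. If $$\text{for all }t\in\mathbb{Z}_L:\quad\sum_{n=0}^{N-1}\sum_{r=0}^{N-1}I[n,r]\Big(\beta_{nr}(0,t)-\sum_{k\neq0}\beta_{nr}(kM_{\mathrm{g}},t)\Big)>0,$$ where the inner sum runs over integers $k\neq 0$ with $k\in\{\lceil (t-(L-1))/M_{\mathrm{g}}\rceil,\dots,\lfloor t/M_{\mathrm{g}}\rfloor\}$ (with $t$ represented in $\{0,\dots,L-1\}$), then the superposition system $\mathscr{F}(I)$ is a frame for $\mathbb{C}^L$.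
   Context: Vectors in $\mathbb{C}^L$ are indexed by $t\in\mathbb{Z}_L$ (represented by $\{0,\dots,L-1\}$), with $\langle x,y\rangle=\sum_t x[t]\overline{y[t]}$. $\mathcal{T}_kw[t]=w[t-k]$ (indices mod $L$), $\mathcal{M}_\beta w[t]=w[t]e^{2\pi i\beta t/L}$. A finite family $\{\phi_j\}$ is a frame for $\mathbb{C}^L$ if there exist $0<A\le B<\infty$ with $A\|x\|^2\le\sum_j|\langle x,\phi_j\rangle|^2\le B\|x\|^2$ for all $x$. Superposition windows: $w_r=\sum_{n=0}^{r}\mathcal{T}_{na}w$ for $r\in\mathbb{Z}_N$ (identified with $\{0,\dots,N-1\}$). Let $M_L=\operatorname{lcm}(1,2,\dots,\max(L,M))$, $b_L=L/M_L$, and $\phi_{m,n,r}=\mathcal{M}_{mb_L}\mathcal{T}_{na}w_r$ for $m\in\mathbb{Z}_{M_L}$, $n,r\in\mathbb{Z}_N$. An ordered partition function is a map $\widetilde I:\mathbb{Z}_N\times\mathbb{Z}_N\to\{0,1\}$, not identically zero, such that (i) if $\widetilde I[n,r]=1$ then $\widetilde I[n,r']=0$ for all $r'\neq r$; (ii) if $\widetilde I[n,r]=1$ then $\widetilde I[n',r']=0$ for all $n'\in\{n+1,\dots,n+r\}$ (mod $N$) and all $r'$; (iii) if $\widetilde I[n,r]=1$ then $\widetilde I[n+r+1,r']=1$ for exactly one $r'\in\mathbb{Z}_N$ (indices mod $N$). Given an ordered partition function $\widetilde I$ and a function $M[n,r]$ on $\mathbb{Z}_N\times\mathbb{Z}_N$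 with positive integer values dividing $M_L$, an admissible selection function is a map $I:\mathbb{Z}_{M_L}\times\mathbb{Z}_N\times\mathbb{Z}_N\to\{0,1\}$ with $I[0,n,r]=\widetilde I[n,r]$ for all $n,r$, and such that $I[0,n,r]=1$ implies $I[(M_L/M[n,r])m,n,r]=1$ for all $m\in\mathbb{Z}_{M[n,r]}$. One writes $I[n,r]$ for $I[0,n,r]$. The superposition system is $\mathscr{F}(I)=\{\phi_{m,n,r}: I[m,n,r]=1\}$. *)

(* Defs.v *)
From mathcomp Require Import all_boot all_order all_algebra.
From mathcomp Require Import reals trigo.
From mathcomp Require Export complex.
Set Implicit Arguments.
Unset Strict Implicit.
Unset Printing Implicit Defensive.
Import Order.TTheory GRing.Theory Num.Theory.
Local Open Scope ring_scope.
Local Open Scope complex_scope.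

(* x[z] for an integer index z, read modulo L. *)
Definition vat (R : realType) (L : nat) (x : 'I_L -> R[i]) (z : int) : R[i] :=
  match @insub nat (fun k => (k < L)%N) 'I_L (absz (z %% L%:Z)%Z) with
  | Some t => x t
  | None => 0
  end.

Definition trans (R : realType) (L : nat) (k : int) (x : 'I_L -> R[i])
  : 'I_L -> R[i] := fun t => vat x (t%:Z - k).

Definition expi (R : realType) (theta : R) : R[i] :=
  (cos theta)%:C + 'i * (sin theta)%:C.

Definition modul (R : realType) (L : nat) (beta : R) (x : 'I_L -> R[i])
  : 'I_L -> R[i] :=
  fun t => x t * expi (2 * pi * beta * (nat_of_ord t)%:R / L%:R).

Definition supwin (R : realType) (L a : nat) (w : 'I_L -> R[i]) (r : nat)
  : 'I_L -> R[i] :=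
  fun t => \sum_(n < r.+1) trans (n * a)%N%:Z w t.

Definition ML (L M : nat) : nat := \big[lcmn/1%N]_(1 <= j < (maxn L M).+1) j.

Definition bL (R : realType) (L M : nat) : R := L%:R / (ML L M)%:R.

Definition phi (R : realType) (L a M : nat) (w : 'I_L -> R[i]) (m n r : nat)
  : 'I_L -> R[i] :=
  modul (m%:R * bL R L M) (trans (n * a)%N%:Z (supwin a w r)).

Definition ip (R : realType) (L : nat) (x y : 'I_L -> R[i]) : R[i] :=
  \sum_(t < L) x t * (y t)^*.
Definition nsq (R : realType) (L : nat) (x : 'I_L -> R[i]) : R[i] :=
  \sum_(t < L) `|x t| ^+ 2.

Definition is_frame (R : realType) (L : nat) (J : finType) (P : pred J)
  (f : J -> 'I_L -> R[i]) : Prop :=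
  exists A B : R, 0 < A /\ A <= B /\
    forall x : 'I_L -> R[i],
      A%:C * nsq x <= \sum_(j | P j) `|ip x (f j)| ^+ 2 <= B%:C * nsq x.

Definition ordered_partition (N : nat) (It : 'I_N -> 'I_N -> bool) : Prop :=
  (exists n r, It n r) /\
  (forall n r r', It n r -> r' != r -> ~~ It n r') /\
  (forall n r, It n r ->
     forall (n' : 'I_N) r', (exists2 j, (1 <= j <= r)%N & nat_of_ord n' = ((n + j) %% N)%N)
       -> ~~ It n' r') /\
  (forall n r, It n r ->
     forall n' : 'I_N, nat_of_ord n' = ((n + r + 1) %% N)%N ->
       #|[pred r' : 'I_N | It n' r']| = 1%N).

Definition admissible (L M N : nat) (It : 'I_N -> 'I_N -> bool)
  (Mf : 'I_N -> 'I_N -> nat) (I : 'I_(ML L M) -> 'I_N -> 'I_N -> bool) : Prop :=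
  (forall n r, (0 < Mf n r)%N /\ (Mf n r %| ML L M)%N) /\
  (forall (m : 'I_(ML L M)) n r, nat_of_ord m = 0%N -> I m n r = It n r) /\
  (forall n r, It n r ->
     forall m : nat, (m < Mf n r)%N ->
       forall j : 'I_(ML L M), nat_of_ord j = (ML L M %/ Mf n r * m)%N -> I j n r).

Definition betanr (R : realType) (L a : nat) (w : 'I_L -> R[i]) (n r : nat)
  (s t : int) : R[i] :=
  vat (supwin a w r) (t - (n * a)%N%:Z) * vat (supwin a w r) (t - (n * a)%N%:Z - s).

(* The integers k <> 0 with ceil((t-(L-1))/Mg) <= k <= floor(t/Mg), i.e.
   t - (L-1) <= k*Mg <= t (all such k lie in [-L, L]). *)
Definition krange (L Mg : nat) (t : int) : seq int :=
  [seq k <- [seq (j%:Z - L%:Z)%R | j <- iota 0 (2 * L).+1]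
     | (k != 0) && (t - (L%:Z - 1) <= k * Mg%:Z <= t)].

(* Main.v *)
Require Import Defs.
From mathcomp Require Import all_boot all_order all_algebra.
From mathcomp Require Import reals trigo complex.
From mathcomp Require Import ring lra zify.
Import Order.TTheory GRing.Theory Num.Theory.
Local Open Scope ring_scope.
Local Open Scope complex_scope.
Section S.
Variable R : realType.
Lemma expiE (th : R) : expi th = cos th +i* sin th.
Proof. rewrite /expi; simpc. by []. Qed.
Lemma expiD (x y : R) : expi (x + y) = expi x * expi y.
Proof. rewrite !expiE sinD cosD; simpc. by rewrite (addrC (sin x * _)). Qed.
Lemma expi0 : expi (0:R) = 1.
Proof. by rewrite expiE cos0 sin0. Qed.
Lemma expiMn (n : nat) (th : R) : expi (n%:R * th) = expi th ^+ n.
Proof. elim: n => [|n IH]; first by rewrite mul0r expi0 expr0.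
by rewrite -addn1 natrD mulrDl mul1r expiD IH exprD expr1. Qed.
Lemma conjE (x : R[i]) : Num.conj x = conjc x.
Proof. reflexivity. Qed.

Lemma expiJ (th : R) : expi th * (expi th)^*%R = 1.
Proof. rewrite conjE expiE; simpc. by rewrite cos2Dsin2 (mulrC (sin th)) addNr. Qed.
Lemma expi_neq1 (th : R) : 0 < th < pi *+ 2 -> expi th != 1.
Proof.
move=> /andP[h0 h2]; rewrite expiE; apply/negP => /eqP [hc hs].
have [hlt|hge] := ltP th pi.
  by move: hs; move/eqP; rewrite gt_eqF // sin_gt0_pi // h0 hlt.
have [hpi|hne] := eqVneq th pi.
  by move: hc; rewrite hpi cospi; lra.
have hlt : pi < th by rewrite lt_neqAle eq_sym hne hge.
have : 0 < sin (th - pi).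
  by apply: sin_gt0_pi; rewrite subr_gt0 hlt ltrBlDr -mulr2n.
by rewrite -oppr_lt0 -sinDpi subrK hs ltxx.
Qed.

Definition zeta (Mg : nat) : R[i] := expi (2 * pi / Mg%:R).

Lemma zetaX Mg k : zeta Mg ^+ k = expi (k%:R * (2 * pi / Mg%:R)).
Proof. by rewrite expiMn. Qed.

Lemma zetaMg Mg : (0 < Mg)%N -> zeta Mg ^+ Mg = 1.
Proof.
move=> hM; rewrite zetaX mulrCA divff ?pnatr_eq0 -?lt0n // mulr1.
by rewrite expiE mulr_natl cos2pi sin2pi.
Qed.

Lemma zeta_eq1 Mg e : (0 < Mg)%N -> (zeta Mg ^+ e == 1) = (Mg %| e)%N.
Proof.
move=> hM; rewrite -(expr_mod e (zetaMg Mg hM)) /dvdn.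
have [->|hr] := eqVneq (e %% Mg)%N 0%N; first by rewrite expr0 eqxx.
apply/negbTE; rewrite zetaX; apply: expi_neq1.
have hr0 : (0 < e %% Mg)%N by rewrite lt0n.
have hrM : (e %% Mg < Mg)%N by rewrite ltn_mod.
have hM' : (0:R) < Mg%:R by rewrite ltr0n.
pose q : R := (e %% Mg)%:R / Mg%:R.
have hq0 : 0 < q by rewrite divr_gt0 ?ltr0n.
have hq1 : q < 1 by rewrite ltr_pdivrMr // mul1r ltr_nat.
have -> : (e %% Mg)%:R * (2 * pi / Mg%:R) = q * (2 * pi).
  by rewrite /q mulrCA mulrC.
have := @pi_gt0 R; rewrite -[pi *+ 2]mulr_natl.
move=> hp; apply/andP; split; clearbody q; nra.
Qed.


Lemma zetaJ Mg : (0 < Mg)%N -> (zeta Mg)^*%R = zeta Mg ^+ Mg.-1.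
Proof.
move=> hM; have h1 := expiJ (2 * pi / Mg%:R); rewrite -/(zeta Mg) in h1.
have h2 : zeta Mg ^+ Mg.-1 * zeta Mg = 1 by rewrite -exprSr prednK // zetaMg.
by rewrite -[LHS]mul1r -{1}h2 -mulrA h1 mulr1.
Qed.

Lemma geom_sum (c : R[i]) n : (0 < n)%N -> c ^+ n = 1 ->
  \sum_(m < n) c ^+ m = if c == 1 then n%:R else 0.
Proof.
move=> hn hc; have [->|hne] := eqVneq c 1.
  by rewrite (eq_bigr (fun _ => 1)) ?sumr_const ?card_ord // => i _; rewrite expr1n.
have := subrX1 c n; rewrite hc subrr => /esym /eqP; rewrite mulf_eq0 subr_eq0 (negbTE hne).
by move/eqP.
Qed.

Lemma cong_dvd Mg t t' : (0 < Mg)%N ->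
  (Mg %| Mg.-1 * t + t')%N = (t == t' %[mod Mg])%N.
Proof.
move=> hM; set e := (Mg.-1 * t + t')%N.
have He : (t + e = t' + t * Mg)%N.
  by rewrite /e addnA -{1}(mul1n t) -mulnDl add1n prednK // addnC mulnC.
rewrite /dvdn -[X in _ == X](mod0n Mg) -(eqn_modDl t) addn0 He addnC modnMDl eq_sym.
by [].
Qed.

Lemma amgm (u v : R[i]) : 0 <= u -> 0 <= v -> u * v *+ 2 <= u ^+ 2 + v ^+ 2.
Proof.
move=> /ger0_real /complex_realP [k ->] /ger0_real /complex_realP [l ->].
rewrite -!rmorphXn -rmorphM -rmorphMn -rmorphD lecR.
have := sqr_ge0 (k - l); rewrite sqrrB; lra.
Qed.

Lemma sum_dvd_nat (F : nat -> R[i]) d K : (0 < d)%N ->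
  \sum_(0 <= m < d * K | (d %| m)%N) F m = \sum_(0 <= m < K) F (d * m)%N.
Proof.
move=> hd; elim: K => [|K IH]; first by rewrite muln0 !big_geq.
rewrite mulnSr (@big_cat_nat _ _ _ (d * K)) //= ?leq_addr // IH big_nat_recr //=.
congr (_ + _).
rewrite big_ltn_cond; last by rewrite -{1}[(d*K)%N]addn0 ltn_add2l.
rewrite (dvdn_mulr _ (dvdnn d)) big_nat_cond big1 ?addr0 //.
move=> i /andP[/andP[h1 h2] /dvdnP [q hq]]; exfalso; subst i.
move: h1 h2; rewrite [(q * d)%N]mulnC -mulnSr !ltn_pmul2l //.
lia.
Qed.

Lemma cong_int (Mg t t' : nat) (k : int) : (t%:Z - t'%:Z = k * Mg%:Z)%R ->
  (t == t' %[mod Mg])%N.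
Proof.
move=> h; have : (t%:Z == t'%:Z %[mod Mg%:Z])%Z.
  by rewrite eqz_mod_dvd h dvdz_mull // dvdzz.
by rewrite !modz_nat eqz_nat.
Qed.

Lemma krange_sum L Mg (F : int -> R[i]) (t : 'I_L) : (0 < Mg)%N ->
  \sum_(k <- krange L Mg t) F (t%:Z - k * Mg%:Z) =
  \sum_(t' : 'I_L | (t' != t) && (t == t' %[mod Mg])%N) F t'%:Z.
Proof.
move=> hM.
set N2 := (2 * L).+1.
pose kj (j : 'I_N2) : int := j%:Z - L%:Z.
pose vj (j : 'I_N2) : int := t%:Z - kj j * Mg%:Z.
pose c (j : 'I_N2) (t' : 'I_L) := (t'%:Z == vj j) && (kj j != 0).
rewrite /krange big_filter big_map.
have -> : iota 0 N2 = index_iota 0 N2 by rewrite /index_iota subn0.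
rewrite big_mkord.
transitivity (\sum_(j : 'I_N2) \sum_(t' | c j t') F t'%:Z).
  rewrite big_mkcond; apply: eq_bigr => j _.
  case: ifP => hP.
    move: hP => /andP[hk /andP[hlo hhi]].
    have hv0 : (0 <= vj j)%R by rewrite /vj /kj subr_ge0.
    have hvL : (absz (vj j) < L)%N.
      have : (vj j < L%:Z)%R by rewrite /vj /kj; lia.
      by rewrite -[vj j]gez0_abs // ltz_nat.
    rewrite (big_pred1 (Ordinal hvL)) /= ?gez0_abs //.
    move=> t' /=; rewrite /c hk andbT -val_eqE /=.
    by rewrite -(eqz_nat t') gez0_abs.
  symmetry; apply: big_pred0 => t'; apply/negP => /andP[/eqP ht hk].
  move/negP: hP; apply; rewrite hk /=.
  have := ltn_ord t'; move: ht; rewrite /vj /kj; lia.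
rewrite (exchange_big_dep xpredT) //= [RHS]big_mkcond; apply: eq_bigr => t' _.
have hMz : (Mg%:Z != 0)%R by rewrite eqz_nat -lt0n.
case: ifP => hQ; last first.
  apply: big_pred0 => j; apply/negP => /andP[/eqP ht hk].
  move/negP: hQ; apply.
  have hd : (t%:Z - t'%:Z = kj j * Mg%:Z)%R by rewrite ht /vj; ring.
  rewrite (cong_int _ _ _ _ hd) andbT; apply/negP => /eqP htt.
  by move: hd; rewrite htt subrr => /esym /eqP; rewrite mulf_eq0 (negbTE hk) (negbTE hMz).
move: hQ => /andP[hne hcg].
have hdv : (Mg%:Z %| t%:Z - t'%:Z)%Z.
  by rewrite -eqz_mod_dvd !modz_nat eqz_nat.
set q := ((t%:Z - t'%:Z) %/ Mg%:Z)%Z.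
have hq : (q * Mg%:Z = t%:Z - t'%:Z)%R by rewrite divzK.
have ht1 := ltn_ord t; have ht2 := ltn_ord t'.
have hqb : (- L%:Z <= q <= L%:Z)%R by nia.
have hj0 : (absz (L%:Z + q)%R < N2)%N.
  have : (L%:Z + q < N2%:Z)%R by rewrite /N2; lia.
  by rewrite -ltz_nat gez0_abs //; lia.
have hkj0 : kj (Ordinal hj0) = q.
  by rewrite /kj /= gez0_abs; [ring | lia].
rewrite (big_pred1 (Ordinal hj0)) // => j /=.
rewrite /c; apply/idP/idP.
  move=> /andP[/eqP ht hk]; rewrite -val_eqE /= -eqz_nat gez0_abs; last by lia.
  have : (kj j * Mg%:Z = q * Mg%:Z)%R by rewrite hq ht /vj; ring.
  move/(mulIf hMz); rewrite /kj => <-; apply/eqP; ring.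
move=> /eqP ->; rewrite hkj0 /vj hkj0.
apply/andP; split; first by apply/eqP; rewrite hq; ring.
apply/negP => /eqP hq0; move: hq; rewrite hq0 mul0r => /esym /eqP.
rewrite subr_eq0 eqz_nat => /eqP htt.
by move: hne; rewrite (val_inj htt) eqxx.
Qed.

Lemma ler2K (u v : R[i]) : u *+ 2 <= v *+ 2 -> u <= v.
Proof. by rewrite lerMn2r. Qed.

Lemma dbl_amgm (I J : finType) (P : I -> J -> bool) (u v : I -> J -> R[i]) :
  (forall i j, 0 <= u i j) -> (forall i j, 0 <= v i j) ->
  \sum_i \sum_(j | P i j) (u i j * v i j) *+ 2 <=
  \sum_i \sum_(j | P i j) (u i j ^+ 2 + v i j ^+ 2).
Proof.
by move=> hu hv; apply: ler_sum => i _; apply: ler_sum => j _; apply: amgm.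
Qed.

Lemma sym_amgm (I : finType) (P : I -> I -> bool) (a : I -> R[i]) (G : I -> I -> R[i]) :
  (forall i j, P i j = P j i) -> (forall i j, G i j = G j i) ->
  (forall i, 0 <= a i) -> (forall i j, 0 <= G i j) ->
  \sum_i \sum_(j | P i j) a i * a j * G i j <=
  \sum_i \sum_(j | P i j) a i ^+ 2 * G i j.
Proof.
move=> hP hG ha hGp.
have E : \sum_i \sum_(j | P i j) a j ^+ 2 * G i j =
          \sum_i \sum_(j | P i j) a i ^+ 2 * G i j.
  rewrite (exchange_big_dep xpredT) //=; apply: eq_bigr => i _.
  apply: eq_big => j /=; first by rewrite hP.
  by move=> _; rewrite hG.
apply: ler2K; rewrite [leRHS]mulr2n -{1}E -big_split /= -sumrMnl.
apply: ler_sum => i _; rewrite -sumrMnl -big_split /=; apply: ler_sum => j _.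
by rewrite -mulrDl -mulrnAl ler_wpM2r // addrC amgm.
Qed.


Lemma CS L (x f : 'I_L -> R[i]) : `|ip x f| ^+ 2 <= nsq x * nsq f.
Proof.
have h1 : `|ip x f| <= \sum_t `|x t| * `|f t|.
  by apply: le_trans (ler_norm_sum _ _ _) _; apply: ler_sum => t _; rewrite normrM norm_conjC.
have hs0 : 0 <= \sum_t `|x t| * `|f t| by apply: sumr_ge0 => t _; rewrite mulr_ge0.
apply: le_trans (_ : (\sum_t `|x t| * `|f t|) ^+ 2 <= _).
  by rewrite !expr2; apply: ler_pM.
apply: ler2K.
have Eu : nsq x * nsq f = \sum_t \sum_(s | true) (`|x t| * `|f s|) ^+ 2.
  rewrite /nsq mulr_suml; apply: eq_bigr => t _; rewrite mulr_sumr.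
  by apply: eq_bigr => s _; rewrite exprMn.
have Ev : nsq x * nsq f = \sum_t \sum_(s | true) (`|x s| * `|f t|) ^+ 2.
  rewrite Eu exchange_big /=; apply: eq_bigr => t _; apply: eq_bigr => s _.
  by [].
rewrite [leRHS]mulr2n {1}Eu Ev -big_split /=.
have -> : (\sum_t `|x t| * `|f t|) ^+ 2 *+ 2 =
  \sum_t \sum_(s | true) ((`|x t| * `|f s|) * (`|x s| * `|f t|)) *+ 2.
  rewrite expr2 mulr_suml -sumrMnl; apply: eq_bigr => t _; rewrite mulr_sumr -sumrMnl.
  by apply: eq_bigr => s _; congr (_ *+ _); ring.
apply: le_trans (@dbl_amgm _ _ (fun _ _ => true) (fun t s => `|x t| * `|f s|)
   (fun t s => `|x s| * `|f t|) _ _) _.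
- by move=> t s; rewrite mulr_ge0.
- by move=> t s; rewrite mulr_ge0.
by apply: ler_sum => t _; rewrite -big_split.
Qed.

Lemma fourier L Mg (y : 'I_L -> R[i]) : (0 < Mg)%N ->
  \sum_(m < Mg) `|\sum_t y t * (zeta Mg ^+ (m * t))^*| ^+ 2 =
  Mg%:R * \sum_(t : 'I_L) \sum_(t' : 'I_L | (t == t' %[mod Mg])%N) y t * (y t')^*.
Proof.
move=> hM; set z := zeta Mg.
pose c (t t' : 'I_L) := (z ^+ t)^*%R * z ^+ t'.
transitivity (\sum_(m < Mg) \sum_t \sum_t' y t * (y t')^* * c t t' ^+ m).
  apply: eq_bigr => m _; rewrite normCK. rewrite rmorph_sum mulr_suml; apply: eq_bigr => t _.
  rewrite mulr_sumr; apply: eq_bigr => t' _.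
  rewrite rmorphM /= conjCK /c exprMn !rmorphXn -!exprM (mulnC t) (mulnC t').
  ring.
rewrite exchange_big /= mulr_sumr; apply: eq_bigr => t _.
rewrite exchange_big /= mulr_sumr [RHS]big_mkcond; apply: eq_bigr => t' _.
rewrite -mulr_sumr geom_sum //.
  have -> : c t t' = z ^+ (Mg.-1 * t + t') by rewrite /c rmorphXn /= zetaJ // exprD exprM.
  rewrite zeta_eq1 // cong_dvd //.
  by case: ifP => _; rewrite ?mulr0 // mulrC.
rewrite /c exprMn -rmorphXn -!exprM (mulnC t) (mulnC t') !exprM zetaMg // !expr1n.
by rewrite rmorph1 mulr1.
Qed.

Lemma main_nr L Mg (x g : 'I_L -> R[i]) : (0 < Mg)%N -> (forall t, 0 <= g t) ->
  Mg%:R * \sum_t `|x t| ^+ 2 * (g t * g t -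
      \sum_(t' | (t' != t) && (t == t' %[mod Mg])%N) g t * g t')
  <= \sum_(m < Mg) `|\sum_t (x t * g t) * (zeta Mg ^+ (m * t))^*| ^+ 2.
Proof.
move=> hM hg.
have hF := @fourier L Mg (fun t => x t * g t) hM.
set Z := \sum_t \sum_(t' | _) _ in hF.
have hZ : 0 <= Z.
  rewrite -(pmulr_rge0 _ (_ : 0 < Mg%:R)) ?ltr0n // -hF.
  by apply: sumr_ge0 => m _; rewrite exprn_ge0.
rewrite hF ler_pM2l ?ltr0n //.
pose P (t t' : 'I_L) := (t == t' %[mod Mg])%N && (t' != t).
pose D := \sum_t `|x t| ^+ 2 * (g t * g t).
pose O := \sum_t \sum_(t' | P t t') (x t * g t) * (x t' * g t')^*.
have hZDO : Z = D + O.
  rewrite /Z /D /O -big_split /=; apply: eq_bigr => t _.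
  rewrite (bigD1 t) //= normCK.
  by rewrite !rmorphM /= (geC0_conj (hg t)); congr (_ + _); ring.
have hD : 0 <= D by apply: sumr_ge0 => t _; rewrite mulr_ge0 ?exprn_ge0 ?mulr_ge0.
pose W := \sum_t \sum_(t' | P t t') `|x t| ^+ 2 * (g t * g t').
have hOW : `|O| <= W.
  apply: le_trans (ler_norm_sum _ _ _) _.
  apply: le_trans (_ : \sum_t \sum_(t' | P t t') `|x t| * `|x t'| * (g t * g t') <= _).
    apply: ler_sum => t _; apply: le_trans (ler_norm_sum _ _ _) _.
    apply: ler_sum => t' _.
    rewrite rmorphM /= (geC0_conj (hg t')) !normrM norm_conjC (ger0_norm (hg t)) (ger0_norm (hg t')).
    by rewrite mulrACA lexx.
  apply: sym_amgm => //.
  - by move=> t t'; rewrite /P eq_sym; congr (_ && _); rewrite eq_sym.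
  - by move=> t t'; rewrite mulrC.
  - by move=> t t'; rewrite mulr_ge0.
have -> : \sum_t `|x t| ^+ 2 * (g t * g t -
      \sum_(t' | (t' != t) && (t == t' %[mod Mg])%N) g t * g t') = D - W.
  rewrite /D /W -sumrB; apply: eq_bigr => t _; rewrite mulrBr mulr_sumr.
  by congr (_ - _); apply: eq_bigl => t'; rewrite /P andbC.
rewrite -(ger0_norm hZ) hZDO.
apply: le_trans (lerB_normD D O); rewrite (ger0_norm hD).
by apply: lerB.
Qed.

Lemma vat_ge0 L (x : 'I_L -> R[i]) z : (forall t, 0 <= x t) -> 0 <= vat x z.
Proof. by move=> hx; rewrite /vat; case: insub. Qed.

Lemma supwin_ge0 L a (w : 'I_L -> R[i]) r t : (forall t, 0 <= w t) ->
  0 <= supwin a w r t.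
Proof. by move=> hw; apply: sumr_ge0 => n _; apply: vat_ge0. Qed.

Lemma phase L M Mg d m t : (0 < L)%N -> (0 < Mg)%N -> (0 < d)%N ->
  ML L M = (d * Mg)%N ->
  expi (2 * pi * ((d * m)%N%:R * bL R L M) * t%:R / L%:R) = zeta Mg ^+ (m * t).
Proof.
move=> hL hM hd hML; rewrite zetaX /bL hML !natrM; congr expi.
have hL' : (L%:R : R) != 0 by rewrite pnatr_eq0 -lt0n.
have hM' : (Mg%:R : R) != 0 by rewrite pnatr_eq0 -lt0n.
have hd' : (d%:R : R) != 0 by rewrite pnatr_eq0 -lt0n.
by field; rewrite hL' hM' hd'.
Qed.
End S.

Lemma ML_gt0 L M : (0 < ML L M)%N.
Proof.
rewrite /ML big_nat_cond; apply: (big_ind (fun x => 0 < x)%N) => //.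
  by move=> u v hu hv; rewrite lcmn_gt0 hu hv.
by move=> i /andP[/andP[hi _] _].
Qed.

Theorem theorem1 (R : realType) (L a M : nat) (w : 'I_L -> R[i])
  (It : 'I_(L %/ a) -> 'I_(L %/ a) -> bool)
  (I : 'I_(ML L M) -> 'I_(L %/ a) -> 'I_(L %/ a) -> bool) (Mg : nat) :
  (0 < L)%N -> (0 < a)%N -> (a %| L)%N -> (0 < M)%N ->
  (forall t, 0 <= w t) ->
  ordered_partition It ->
  admissible It (fun _ _ => Mg) I ->
  (1 <= Mg <= L)%N ->
  (forall t : 'I_L,
     0 < \sum_(n < L %/ a) \sum_(r < L %/ a)
           (It n r)%:R * (betanr a w n r 0 t
                          - \sum_(k <- krange L Mg t) betanr a w n r (k * Mg%:Z) t)) ->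
  is_frame (fun j : 'I_(ML L M) * 'I_(L %/ a) * 'I_(L %/ a) => I j.1.1 j.1.2 j.2)
           (fun j => @phi R L a M w j.1.1 j.1.2 j.2).
Proof.
move=> hL ha hdiv hM hw hOP hadm /andP[hMg hMgL] hH.
have [hadm1 [hadm2 hadm3]] := hadm.
have [[n0 [r0 _]] _] := hOP.
have hMgML : (Mg %| ML L M)%N := (hadm1 n0 r0).2.
set d := (ML L M %/ Mg)%N.
have hML : ML L M = (d * Mg)%N by rewrite /d divnK.
have hd : (0 < d)%N by move: (ML_gt0 L M); rewrite hML muln_gt0 => /andP[].
pose g (n r : nat) : 'I_L -> R[i] := fun t => trans (n * a)%N%:Z (supwin a w r) t.
have hg : forall n r t, 0 <= g n r t.
  by move=> n r t; apply: vat_ge0 => t'; apply: supwin_ge0.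
pose B (n r : nat) (t : 'I_L) := betanr a w n r 0 t
   - \sum_(k <- krange L Mg t) betanr a w n r (k * Mg%:Z) t.
pose H (t : 'I_L) := \sum_(n < L %/ a) \sum_(r < L %/ a) (It n r)%:R * B n r t.
have hBg : forall n r t, B n r t = g n r t * g n r t -
    \sum_(t' | (t' != t) && (t == t' %[mod Mg])%N) g n r t * g n r t'.
  move=> n r t; rewrite /B /betanr subr0; congr (_ - _).
  rewrite -(@krange_sum R L Mg (fun z => vat (supwin a w r) (t%:Z - (n * a)%N%:Z) *
              vat (supwin a w r) (z - (n * a)%N%:Z)) t) //.
  by apply: eq_bigr => k _; congr (_ * vat _ _); ring.
have lower : forall x : 'I_L -> R[i],
  Mg%:R * \sum_t `|x t| ^+ 2 * H t <=
  \sum_(j | I j.1.1 j.1.2 j.2) `|ip x (@phi R L a M w j.1.1 j.1.2 j.2)| ^+ 2.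
  move=> x.
  pose T (m n r : nat) := `|ip x (@phi R L a M w m n r)| ^+ 2.
  pose P' (j : 'I_(ML L M) * 'I_(L %/ a) * 'I_(L %/ a)) := It j.1.2 j.2 && (d %| j.1.1)%N.
  have hPI : forall j, P' j -> I j.1.1 j.1.2 j.2.
    move=> [[m n] r] /andP[/= hIt hdm].
    apply: (hadm3 n r hIt (m %/ d)%N); first by rewrite ltn_divLR // mulnC -hML.
    by rewrite -/d mulnC divnK.
  apply: le_trans (_ : \sum_(j | P' j) T j.1.1 j.1.2 j.2 <= _); last first.
    rewrite [leRHS](bigID P') /=.
    have EP : \sum_(j | I j.1.1 j.1.2 j.2 && P' j) `|ip x (@phi R L a M w j.1.1 j.1.2 j.2)| ^+ 2
        = \sum_(j | P' j) T j.1.1 j.1.2 j.2.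
      apply: eq_bigl => j; apply/idP/idP => [/andP[_ h] | hj] //.
      by rewrite hj andbT hPI.
    rewrite EP.
    by rewrite lerDl; apply: sumr_ge0 => j _; rewrite exprn_ge0.
  pose tau (m : 'I_(ML L M)) (n r : 'I_(L %/ a)) :=
    if It n r && (d %| m)%N then T m n r else 0.
  have E1 : \sum_(j | P' j) T j.1.1 j.1.2 j.2 =
      \sum_(n < L %/ a) \sum_(r < L %/ a) (It n r)%:R * \sum_(m < ML L M | (d %| m)%N) T m n r.
    transitivity (\sum_(p : 'I_(ML L M) * 'I_(L %/ a)) \sum_(r : 'I_(L %/ a)) tau p.1 p.2 r).
      by rewrite (pair_bigA _ (fun p r => tau p.1 p.2 r)) big_mkcond.
    rewrite -(pair_bigA _ (fun m n => \sum_r tau m n r)) /= exchange_big /=.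
    apply: eq_bigr => n _; rewrite exchange_big /=; apply: eq_bigr => r _.
    rewrite /tau; case: (It n r); last by rewrite mul0r big1.
    by rewrite mul1r [RHS]big_mkcond.
  rewrite E1.
  have E2 : Mg%:R * \sum_t `|x t| ^+ 2 * H t = \sum_(n < L %/ a) \sum_(r < L %/ a)
      (It n r)%:R * (Mg%:R * \sum_t `|x t| ^+ 2 * B n r t).
    transitivity (\sum_t \sum_(n < L %/ a) \sum_(r < L %/ a)
        Mg%:R * `|x t| ^+ 2 * ((It n r)%:R * B n r t)).
      rewrite mulr_sumr; apply: eq_bigr => t _; rewrite mulrA mulr_sumr.
      by apply: eq_bigr => n _; rewrite mulr_sumr.
    rewrite exchange_big; apply: eq_bigr => n _ /=; rewrite exchange_big; apply: eq_bigr => r _ /=.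
    by rewrite !mulr_sumr; apply: eq_bigr => t _; ring.
  rewrite E2; apply: ler_sum => n _; apply: ler_sum => r _.
  case: (It n r); last by rewrite !mul0r.
  rewrite !mul1r.
  have -> : \sum_t `|x t| ^+ 2 * B n r t = \sum_t `|x t| ^+ 2 * (g n r t * g n r t -
      \sum_(t' | (t' != t) && (t == t' %[mod Mg])%N) g n r t * g n r t').
    by apply: eq_bigr => t _; rewrite hBg.
  apply: le_trans (@main_nr R L Mg x (g n r) hMg (hg n r)) _.
  rewrite -(big_mkord (fun m => d %| m)%N (fun m => T m n r)).
  have := @sum_dvd_nat R (fun m => T m n r) d Mg hd; rewrite -hML => ->.
  rewrite big_mkord le_eqVlt; apply/orP; left; apply/eqP.
  apply: eq_bigr => m _; rewrite /T; congr (`| _ | ^+ 2).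
  rewrite /ip; apply: eq_bigr => t _.
  rewrite /phi /modul (@phase R L M Mg d) // rmorphM /= (geC0_conj (hg n r t)) mulrA.
  by [].
have hH0 : forall t, 0 < H t by move=> t; exact: hH t.
pose h (t : 'I_L) : R := complex.Re (H t).
have hHh : forall t, H t = (h t)%:C.
  by move=> t; rewrite /h RRe_real // ger0_real // ltW.
have hh : forall t, 0 < h t by move=> t; have := hH0 t; rewrite hHh ltcR.
pose SI := \sum_t (h t)^-1.
have hle : forall t, (h t)^-1 <= SI.
  move=> t; rewrite /SI (bigD1 t) //= lerDl; apply: sumr_ge0 => s _.
  by rewrite invr_ge0 ltW.
have hSI : 0 < SI by apply: lt_le_trans (hle (Ordinal hL)); rewrite invr_gt0.
pose A := Mg%:R * SI^-1.
have hA : 0 < A by rewrite mulr_gt0 ?ltr0n // invr_gt0.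
have hAH : forall t, A%:C <= Mg%:R * H t.
  move=> t; rewrite hHh -(rmorph_nat (real_complex R)) -rmorphM lecR /A.
  rewrite ler_pM2l ?ltr0n // -[h t]invrK lef_pV2 ?hle // qualifE /= ?invr_gt0 //.
pose f := (fun j : 'I_(ML L M) * 'I_(L %/ a) * 'I_(L %/ a) => @phi R L a M w j.1.1 j.1.2 j.2).
pose Bs := \sum_j complex.Re (nsq (f j)).
have hnsq : forall (y : 'I_L -> R[i]), 0 <= nsq y.
  by move=> y; apply: sumr_ge0 => t _; rewrite exprn_ge0.
have hnsqC : forall (y : 'I_L -> R[i]), nsq y = (complex.Re (nsq y))%:C.
  by move=> y; rewrite RRe_real // ger0_real.
have hBs : 0 <= Bs.
  apply: sumr_ge0 => j _; have := hnsq (f j); rewrite hnsqC ler0c //.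
exists A, (A + Bs); split; first exact: hA.
split; first by rewrite lerDl.
move=> x; apply/andP; split.
  apply: le_trans (lower x); rewrite /nsq mulr_sumr mulr_sumr.
  apply: ler_sum => t _; rewrite [leRHS]mulrCA [leLHS]mulrC.
  by apply: ler_wpM2l; [rewrite exprn_ge0 | apply: hAH].
apply: le_trans (_ : _ <= \sum_j nsq x * nsq (f j)) _.
  apply: le_trans (_ : _ <= \sum_(j | I j.1.1 j.1.2 j.2) nsq x * nsq (f j)) _.
    by apply: ler_sum => j _; exact: CS.
  rewrite [leRHS](bigID (fun j => I j.1.1 j.1.2 j.2)) /= lerDl.
  by apply: sumr_ge0 => j _; rewrite mulr_ge0.
rewrite -mulr_sumr mulrC rmorphD /= mulrDl.
have ES : \sum_j nsq (f j) = Bs%:C.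
  by rewrite /Bs rmorph_sum; apply: eq_bigr => j _; exact: hnsqC.
rewrite ES; apply: ler_wpDl; last exact: lexx.
by rewrite mulr_ge0 ?hnsq // ler0c ltW.
Qed.
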